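(* For $k\ge1$, the linear simplex $\beta$ code $\mathcal{S}_k^\beta$ has type $\left(q^{(s-1)(k-1)}\frac{q^k-1}{q-1};k,0,\dots,0\right)$.
   Context: Let $R$ be a finite commutative chain ring with maximal ideal $\langle\gamma\rangle$, nilpotency index $s$ and residue field $R/\langle\gamma\rangle\cong\mathbb{F}_q$. Fix coset representatives $T=\{e_0,\dots,e_{q-1}\}$ with $e_0=0,e_1=1$, ordered $e_0<\dots<e_{q-1}$; each $r\in R$ is uniquely $\sum_{i=0}^{s-1}r_i\gamma^i$, $r_i\in T$; order $R$ by $x>y$ iff $x_i>y_i$ in $T$ for the largest $i$ with $x_i\neq y_i$; list $R=\{\rho_0,\dots,\rho_{q^s-1}\}$ increasingly. $\mathbf{a}^{(m)}$ is the constant vector of length $m$. Define $G_1^\alpha=(\rho_0\ \cdots\ \rho_{q^s-1})$ and, for $k>1$, $G_k^\alpha$ as the matrix of $q^s$ column blocks, the $j$-th having first row $\boldsymbol{\rho_j}^{(q^{s(k-1)})}$ and $G_{k-1}^\alpha$ below. List $\langle\gamma\rangle$ increasingly as $a_0\gamma<\dots<a_{q^{s-1}-1}\gamma$. Define $G_1^\beta=(1)$ and, for $k>1$, $G_k^\beta$ as the matrix with column blocks: first a block with first row $\mathbf{1}^{(q^{s(k-1)})}$ and $G_{k-1}^\alpha$ below; then for each $j=0,\dots,q^{s-1}-1$ a block with first row the constant vector with entry $a_j\gamma$ and $G_{k-1}^\beta$ below. $\mathcal{S}_k^\beta$ is the $R$-submodule generated by the rows of $G_k^\beta$. A linear code $\mathcal{C}\subseteq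 R^n$ has type $(n;t_1,\dots,t_s)$ if $\mathcal{C}\cong\bigoplus_{i=1}^s(R/\langle\gamma^{s-i+1}\rangle)^{t_i}$ as $R$-modules (the $t_i$ are unique); type $(n;k,0,\dots,0)$ means free of rank $k$. *)

(* Defs.v *)
From HB Require Import structures.
From mathcomp Require Import all_boot all_order all_algebra.
Set Implicit Arguments. Unset Strict Implicit. Unset Printing Implicit Defensive.
Import GRing.Theory.
Local Open Scope ring_scope.

Section ChainRingCodes.
Variable R : finComUnitRingType.

Definition in_ideal (gamma x : R) : Prop := exists y : R, x = y * gamma.

Definition chain_ring (gamma : R) (s : nat) : Prop :=
  [/\ (0 < s)%N,
      (forall x : R, x \notin GRing.unit <-> in_ideal gamma x),
      gamma ^+ s = 0 & gamma ^+ s.-1 != 0].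

(* T = [:: e_0; ...; e_(q-1)] is a set of coset representatives of R/<gamma>,
   in the order e_0 < ... < e_(q-1), with e_0 = 0 and e_1 = 1. *)
Definition coset_reps (gamma : R) (T : seq R) : Prop :=
  [/\ (1 < size T)%N, T`_0 = 0, T`_1 = 1,
      (forall i j, (i < size T)%N -> (j < size T)%N ->
          in_ideal gamma (T`_i - T`_j) -> i = j)
    & (forall x : R, exists2 i, (i < size T)%N & in_ideal gamma (x - T`_i))].

(* rho_j = sum_i e_(d_i) gamma^i where d_i is the i-th base-q digit of j:
   this is the increasing listing of R for the order of the paper
   (comparison of the gamma-adic digits starting from the highest one). *)
Definition rho_elt (gamma : R) (s : nat) (T : seq R) (j : nat) : R :=
  \sum_(i < s) T`_((j %/ (size T) ^ i) %% size T) * gamma ^+ i.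

Definition rho_list (gamma : R) (s : nat) (T : seq R) : seq R :=
  [seq rho_elt gamma s T j | j <- iota 0 ((size T) ^ s)].

(* increasing listing a_0 gamma < ... < a_(q^(s-1)-1) gamma of <gamma>:
   the elements of R whose 0-th digit is e_0 = 0, i.e. rho_(q j). *)
Definition gamma_list (gamma : R) (s : nat) (T : seq R) : seq R :=
  [seq rho_elt gamma s T (size T * j) | j <- iota 0 ((size T) ^ s.-1)].

(* columns of G_k^alpha (each column a list of length k, top entry first) *)
Fixpoint alpha_cols (rho : seq R) (k : nat) : seq (seq R) :=
  match k with
  | 0 => [:: [::]]
  | k'.+1 => flatten [seq [seq r :: c | c <- alpha_cols rho k'] | r <- rho]
  end.

Fixpoint beta_cols (rho gl : seq R) (k : nat) : seq (seq R) :=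
  match k with
  | 0 => [::]
  | k'.+1 => [seq 1 :: c | c <- alpha_cols rho k']
             ++ flatten [seq [seq a :: c | c <- beta_cols rho gl k'] | a <- gl]
  end.

Definition beta_columns (gamma : R) (s : nat) (T : seq R) (k : nat) :=
  beta_cols (rho_list gamma s T) (gamma_list gamma s T) k.

Definition beta_len (gamma : R) (s : nat) (T : seq R) (k : nat) : nat :=
  size (beta_columns gamma s T k).

Definition G_beta (gamma : R) (s : nat) (T : seq R) (k : nat)
  : 'M[R]_(k, beta_len gamma s T k) :=
  \matrix_(i < k, j < beta_len gamma s T k)
     nth 0 (nth [::] (beta_columns gamma s T k) j) i.

Definition simplex_beta (gamma : R) (s : nat) (T : seq R) (k : nat)
  : 'rV[R]_(beta_len gamma s T k) -> Prop :=
  fun v => exists c : 'rV[R]_k, v = c *m G_beta gamma s T k.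

(* a code C in R^n is free of rank k, i.e. C is isomorphic to R^k as an
   R-module (type (n; k, 0, ..., 0)) *)
Definition free_of_rank (n k : nat) (C : 'rV[R]_n -> Prop) : Prop :=
  exists f : 'rV[R]_k -> 'rV[R]_n,
    [/\ (forall (a : R) (u v : 'rV[R]_k), f (a *: u + v) = a *: f u + f v),
        injective f
      & (forall v, C v <-> exists u, f u = v)].

End ChainRingCodes.

Arguments in_ideal {R}.
Arguments chain_ring {R}.
Arguments coset_reps {R}.
Arguments rho_elt {R}.
Arguments rho_list {R}.
Arguments gamma_list {R}.
Arguments beta_columns {R}.
Arguments beta_len {R}.
Arguments G_beta {R}.
Arguments simplex_beta {R}.
Arguments free_of_rank {R}.

(* Main.v *)
Require Import Defs.
From HB Require Import structures.
From mathcomp Require Import all_boot all_order all_algebra zify.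
Local Open Scope ring_scope.
Import GRing.Theory.

Section Aux.
Variable R : finComUnitRingType.

Lemma size_fm (X Y : Type) (g : X -> Y -> seq R) (A : seq Y) (s : seq X) :
  size (flatten [seq [seq g r c | c <- A] | r <- s]) = (size s * size A)%N.
Proof. by elim: s => //= r s IH; rewrite size_cat size_map IH mulSn. Qed.

Lemma size_alpha (rho : seq R) k : size (alpha_cols rho k) = (size rho ^ k)%N.
Proof.
elim: k => //= k IH; rewrite size_fm IH expnS //.
Qed.

Lemma size_beta (rho gl : seq R) k :
  size (beta_cols rho gl k.+1) =
  (size rho ^ k + size gl * size (beta_cols rho gl k))%N.
Proof.
by rewrite /= size_cat size_map size_alpha size_fm.
Qed.

Fixpoint ev (k i : nat) : seq R :=
  match k with
  | 0 => [::]
  | k'.+1 => if i is i'.+1 then 0 :: ev k' i' else 1 :: nseq k' 0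
  end.

Lemma nth_ev k i l : (l < k)%N -> nth 0 (ev k i) l = (l == i)%:R.
Proof.
elim: k i l => // k IH [|i] [|l] //= Hl.
- by rewrite nth_nseq; case: ifP.
- by rewrite IH.
Qed.

Lemma nseq_alpha (rho : seq R) k : 0 \in rho -> nseq k 0 \in alpha_cols rho k.
Proof.
move=> H0; elim: k => [|k IH] /=; first by rewrite inE.
apply/flatten_mapP; exists 0 => //; exact: map_f.
Qed.

Lemma ev_beta (rho gl : seq R) k i : 0 \in rho -> 0 \in gl -> (i < k)%N ->
  ev k i \in beta_cols rho gl k.
Proof.
move=> H0 G0; elim: k i => // k IH [|i] Hi /=; rewrite mem_cat.
  by rewrite (map_f (fun c => 1 :: c)) ?nseq_alpha.
apply/orP; right; apply/flatten_mapP; exists 0 => //.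
by apply: map_f; apply: IH.
Qed.

End Aux.

Lemma rho0 (R : finComUnitRingType) (gamma : R) s (T : seq R) :
  T`_0 = 0 -> rho_elt gamma s T 0 = 0.
Proof.
move=> H; rewrite /rho_elt big1 // => i _; rewrite div0n mod0n H mul0r //.
Qed.

Theorem proposition3p2 (R : finComUnitRingType) (gamma : R) (s : nat) (T : seq R)
  (k : nat) :
  chain_ring gamma s -> coset_reps gamma T -> (1 <= k)%N ->
  let q := size T in
  beta_len gamma s T k = (q ^ ((s - 1) * (k - 1)) * ((q ^ k - 1) %/ (q - 1)))%N /\
  free_of_rank (beta_len gamma s T k) k (simplex_beta gamma s T k).
Proof.
case=> s0 _ _ _ [q1 T0 _ _ _] k1 q.
have qpos : (0 < q)%N by apply: ltn_trans q1.
have rho0in : 0 \in rho_list gamma s T.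
  apply/mapP; exists 0%N; last by rewrite rho0.
  by rewrite mem_iota add0n expn_gt0 qpos.
have gl0in : 0 \in gamma_list gamma s T.
  apply/mapP; exists 0%N; last by rewrite muln0 rho0.
  by rewrite mem_iota add0n expn_gt0 qpos.
split.
  rewrite /beta_len /beta_columns.
  clear rho0in gl0in.
  have q1' : (0 < q.-1)%N by rewrite -subn1 subn_gt0.
  case: k k1 => // k _; rewrite !subn1 predn_exp mulKn // succnK.
  case: s s0 => // s' _; rewrite succnK.
  elim: k => [|k IH].
    rewrite size_beta /= muln0 addn0 expn0 big_ord_recr big_ord0 /=.
    by rewrite muln0 expn0.
  rewrite size_beta IH /rho_list /gamma_list !size_map !size_iota -/q.
  rewrite [in RHS]big_ord_recr /= mulnDr mulnA -!expnD addnC.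
  congr (_ + _)%N.
    by rewrite mulnS.
  by rewrite -expnM mulSn addnC.
exists (fun u => u *m G_beta gamma s T k); split.
- by move=> a u v; rewrite mulmxDl scalemxAl.
- move=> u v Huv; apply/rowP => i.
  have Hin : ev R k i \in beta_columns gamma s T k :=
    ev_beta R _ _ k i rho0in gl0in (ltn_ord i).
  have Hj : (index (ev R k i) (beta_columns gamma s T k) < beta_len gamma s T k)%N.
    by rewrite /beta_len index_mem.
  pose j := Ordinal Hj.
  have key : forall w : 'rV[R]_k, (w *m G_beta gamma s T k) 0 j = w 0 i.
    move=> w; rewrite mxE (bigD1 i) //= big1 ?addr0.
      by rewrite mxE nth_index // nth_ev // eqxx mulr1.
    move=> l Hl; rewrite mxE nth_index // nth_ev //.
    have -> : (nat_of_ord l == nat_of_ord i) = false by exact: negbTE Hl.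
    by rewrite mulr0.
  by rewrite -key Huv key.
- by move=> v; split => [[c ->]|[u <-]]; [exists c | exists u].
Qed.
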